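(* (a) If $x,y\in P$ are distinct, then $|\{x,y\}^{\perp}|\geq 3$ in $\mathbb{S}$. (b) If $u',v'\in P'$ are distinct, then $|\{u',v'\}^{\perp}|\geq 3$ in $\mathbb{S}$.
   Context: Let $S=(P,L)$ and $S'=(P',L')$ be generalized quadrangles of order $(2,2)$ (every line has 3 points, every point lies on 3 lines, and for each point $x$ and line $l\not\ni x$ exactly one point of $l$ is collinear with $x$), with an isomorphism $x\mapsto x'$ from $S$ to $S'$ (write $u$ for the preimage of $u'\in P'$). In a point-line geometry, $x^{\perp}$ is $x$ together with all points collinear with $x$, and $A^{\perp}=\bigcap_{a\in A}a^{\perp}$. A triad is a set of three pairwise non-collinear points, complete if $|T^{\perp}|=3$. Let $\mathcal{P}=\{(x,y')\in P\times P':y'\in x'^{\perp}\}$ and $\mathcal{L}$ the set of all $3$-subsets $\{(x,u'),(y,v'),(z,w')\}$ of $\mathcal{P}$ where $T=\{x,y,z\}$ (three distinct points) is a line or complete triad of $S$ and $\{u',v',w'\}=T'^{\perp}$ in $S'$ with $u',v',w'$ distinct. The geometry $\mathbb{S}=(\mathbb{P},\mathbb{L})$ has point set $\mathbb{P}=\mathcal{P}\cup P\cup P'$ (disjoint union) and line set $\mathcal{L}\cup\{\{x,(x,u'),u'\}:(x,u')\in\mathcal{P}\}$. *)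

(* Defs.v *)
From mathcomp Require Import all_boot.
Set Implicit Arguments. Unset Strict Implicit. Unset Printing Implicit Defensive.

Section Geometry.
Variable T : finType.
Variable Pts : {set T}.
Variable L : {set {set T}}.

Definition collinear (x y : T) : bool := [exists l in L, (x \in l) && (y \in l)].

Definition perp1 (x : T) : {set T} :=
  [set y in Pts | (y == x) || collinear x y].

Definition perp (A : {set T}) : {set T} :=
  Pts :&: \bigcap_(a in A) perp1 a.

Definition triad (A : {set T}) : bool :=
  [&& A \subset Pts, #|A| == 3 &
      [forall a in A, forall b in A, (a != b) ==> ~~ collinear a b]].

Definition complete_triad (A : {set T}) : bool := triad A && (#|perp A| == 3).

End Geometry.

(* Generalized quadrangle of order (2,2), point set = all of T. *)
Definition GQ22 (T : finType) (L : {set {set T}}) : Prop :=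
  [/\ forall l, l \in L -> #|l| = 3,
      forall x : T, #|[set l in L | x \in l]| = 3 &
      forall (x : T) l, l \in L -> x \notin l ->
        #|[set y in l | collinear L x y]| = 1].

Definition GQiso (P P' : finType) (L : {set {set P}}) (L' : {set {set P'}})
  (f : P -> P') : Prop :=
  bijective f /\ forall l : {set P}, (l \in L) = (f @: l \in L').

(* Points of the new geometry: disjoint union  calP + P + P'  where
   calP is carved out of P * P' by the predicate calPp. *)
Definition SP (P P' : finType) : finType := ((P * P') + (P + P'))%type.

Section Construction.
Variables (P P' : finType) (L : {set {set P}}) (L' : {set {set P'}}) (f : P -> P').

(* (x, y') in calP  iff  y' in x'^perp in S' *)
Definition calPp (p : P * P') : bool := p.2 \in perp1 [set: P'] L' (f p.1).

Definition inP (x : P) : SP P P' := inr (inl x).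
Definition inP' (u : P') : SP P P' := inr (inr u).
Definition inCalP (x : P) (u : P') : SP P P' := inl (x, u).

Definition SPts : {set SP P P'} :=
  [set p | match p with inl q => calPp q | inr _ => true end].

Definition calL_line (B : {set SP P P'}) : bool :=
  [exists x : P, exists y : P, exists z : P,
   exists u : P', exists v : P', exists w : P',
   [&& [&& x != y, x != z & y != z],
       [&& u != v, u != w & v != w],
       [&& calPp (x, u), calPp (y, v) & calPp (z, w)],
       ([set x; y; z] \in L) || complete_triad [set: P] L [set x; y; z],
       [set u; v; w] == perp [set: P'] L' (f @: [set x; y; z]) &
       B == [set inCalP x u; inCalP y v; inCalP z w]]].

Definition vert_line (B : {set SP P P'}) : bool :=
  [exists x : P, exists u : P',
     calPp (x, u) && (B == [set inP x; inCalP x u; inP' u])].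

Definition SLines : {set {set SP P P'}} :=
  [set B | calL_line B || vert_line B].

End Construction.

(* Main.v *)
Require Import Defs.
From mathcomp Require Import all_boot.

Section GQ.
Variables (T : finType) (L : {set {set T}}).
Hypothesis H : GQ22 L.

Lemma col_sym x y : collinear L x y = collinear L y x.
Proof.
by apply/existsP/existsP => -[l /andP[lL /andP[a b]]]; exists l; rewrite lL a b.
Qed.

Lemma two_lines l m p q : l \in L -> m \in L -> p != q ->
  p \in l -> q \in l -> p \in m -> q \in m -> l = m.
Proof.
case: H => H1 _ H3 lL mL pq pl ql pm qm.
apply/eqP; apply: contraT => nlm.
have /existsP [z /andP[zm zl]] : [exists z, (z \in m) && (z \notin l)].
  apply: contraR nlm => /existsPn nz.
  have sml : m \subset l.
    apply/subsetP => z zm; have := nz z; rewrite zm /= negbK; done.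
  by rewrite eq_sym eqEcard sml H1 // H1.
have := H3 z l lL zl.
have sub : [set p; q] \subset [set y in l | collinear L z y].
  apply/subsetP => y; rewrite !inE => /orP[]/eqP->;
    rewrite ?pl ?ql /=; apply/existsP; exists m; by rewrite mL zm ?pm ?qm.
have := subset_leq_card sub; rewrite cards2 pq => le2 e; by rewrite e in le2.
Qed.

Lemma gq_perp2 a b : a != b ->
  3 <= #|perp1 [set: T] L a :&: perp1 [set: T] L b|.
Proof.
move=> ab.
have [H1 H2 H3] := H.
case cab: (collinear L a b).
  case/existsP: cab => l /andP[lL /andP[al bl]].
  rewrite -(H1 l lL); apply: subset_leq_card; apply/subsetP => y yl.
  rewrite !inE; apply/andP; split; apply/orP; right; apply/existsP; exists l;
    by rewrite lL yl ?al ?bl.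
pose La := [set l in L | a \in l].
pose g (l : {set T}) := odflt a [pick y in [set y in l | collinear L b y]].
have gP l : l \in La -> (g l \in l) && collinear L b (g l).
  rewrite inE => /andP[lL al].
  have bl : b \notin l.
    apply: contraFN cab => bl; apply/existsP; exists l; by rewrite lL al bl.
  have := H3 b l lL bl => /eqP /cards1P [y ey].
  rewrite /g; case: pickP => [y' |]; first by rewrite inE.
  by move=> /(_ y); rewrite ey inE eqxx.
have gna l : l \in La -> g l != a.
  move=> /gP /andP[_ cb]; apply: contraFN cab => /eqP e; move: cb; rewrite e.
  by rewrite col_sym.
rewrite -(H2 a) -/La -(card_in_imset (f := g)).
  apply: subset_leq_card; apply/subsetP => y /imsetP [l lLa ->].
  have /andP[gl cb] := gP l lLa.
  move: (lLa); rewrite inE => /andP[lL al].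
  rewrite !inE cb orbT !andbT !andTb; apply/orP; right; apply/existsP; exists l.
  by rewrite lL al gl.
move=> l m lLa mLa e.
have /andP[gl _] := gP l lLa; have /andP[gm _] := gP m mLa.
move: (lLa) (mLa); rewrite !inE => /andP[lL al] /andP[mL am].
have gm' : g l \in m by rewrite e.
exact: (two_lines _ _ _ _ lL mL (gna l lLa) gl al gm' am).
Qed.

End GQ.

Theorem lemma4p1 (P P' : finType) (L : {set {set P}}) (L' : {set {set P'}})
  (f : P -> P') :
  GQ22 L -> GQ22 L' -> GQiso L L' f ->
  (forall x y : P, x != y ->
     3 <= #|perp (SPts L' f) (SLines L L' f) [set inP P' x; inP P' y]|) /\
  (forall u v : P', u != v ->
     3 <= #|perp (SPts L' f) (SLines L L' f) [set inP' P u; inP' P v]|).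
Proof.
move=> HL HL' [[g fg gf] _].
have vcol x u : u \in perp1 [set: P'] L' (f x) ->
   (inP P' x \in perp1 (SPts L' f) (SLines L L' f) (inP' P u)) &&
   (inP' P u \in perp1 (SPts L' f) (SLines L L' f) (inP P' x)).
  move=> cu.
  have BL : [set inP P' x; inCalP x u; inP' P u] \in SLines L L' f.
    rewrite inE; apply/orP; right; apply/existsP; exists x; apply/existsP; exists u.
    by rewrite /calPp /= cu eqxx.
  rewrite !inE /=; apply/andP; split; apply/existsP;
    exists [set inP P' x; inCalP x u; inP' P u]; by rewrite BL !inE !eqxx ?orbT.
have psym a b : (a \in perp1 [set: P'] L' b) = (b \in perp1 [set: P'] L' a).
  by rewrite !inE eq_sym col_sym.
split.
  move=> x y xy.
  have fxy : f x != f y by apply: contra xy => /eqP /(can_inj fg) ->.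
  apply: leq_trans (@gq_perp2 _ _ HL' _ _ fxy) _.
  rewrite -(card_in_imset (f := @inP' P P')); last by move=> a b _ _ [].
  apply: subset_leq_card; apply/subsetP => p /imsetP [u].
  rewrite inE => /andP[ux uy] ->.
  rewrite inE; apply/andP; split; first by rewrite inE.
  apply/bigcapP => a /set2P[]->.
    by have /andP[_ ->] := vcol x u ux.
  by have /andP[_ ->] := vcol y u uy.
move=> u v uv.
apply: leq_trans (@gq_perp2 _ _ HL' _ _ uv) _.
rewrite -(card_in_imset (f := fun y => inP P' (g y))); last first.
  by move=> a b _ _ [] /(can_inj gf).
apply: subset_leq_card; apply/subsetP => p /imsetP [y].
rewrite inE => /andP[yu yv] ->.
rewrite inE; apply/andP; split; first by rewrite inE.
apply/bigcapP => a /set2P[]->.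
  have yu' : u \in perp1 [set: P'] L' (f (g y)) by rewrite gf -psym.
  by have /andP[-> _] := vcol (g y) u yu'.
have yv' : v \in perp1 [set: P'] L' (f (g y)) by rewrite gf -psym.
by have /andP[-> _] := vcol (g y) v yv'.
Qed.
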